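(* Assume that $|l+L|\leq N$. Set $\vec{N} = (N+L,N-L)$. Parameterize a $2\times 2$ complex matrix as $Z=\begin{pmatrix}x_1 & y_1\\ x_2 & y_2\end{pmatrix}$. Then the polynomial $\varphi_\sigma$ defined by \[ \varphi_\sigma = \begin{cases} (x_{1}\bar{x}_{2})^{N-l-L}(\bar{x}_{2})^{2(l+L)}(x_{1}y_{2}-x_{2}y_{1})^{l+2L}, & \text{if } l+L\ge 0,\ l+2L\ge 0;\\ (x_{1}\bar{x}_{2})^{N-l-L}(\bar{x}_{2})^{2(l+L)}(\bar{x}_{1}\bar{y}_{2}-\bar{x}_{2}\bar{y}_{1})^{-(l+2L)}, & \text{if } l+L\ge 0,\ l+2L\le 0;\\ (x_{1}\bar{x}_{2})^{N+l+L}(x_{1})^{-2(l+L)}(x_{1}y_{2}-x_{2}y_{1})^{l+2L}, & \text{if } l+L\le 0,\ l+2L\ge 0;\\ (x_{1}\bar{x}_{2})^{N+l+L}(x_{1})^{-2(l+L)}(\bar{x}_{1}\bar{y}_{2}-\bar{x}_{2}\bar{y}_{1})^{-(l+2L)}, & \text{if } l+L\le 0,\ l+2L\le 0 \end{cases} \] is a bi-$(\vec{N},\chi_{-l}\otimes\chi_{l+2L})$-equivariant polynomial function in $\mathbb{C}[\mathrm{Mat}_{2}^{\mathbb{R}}]$. The restriction map $\iota_2: \mathbb{C}[\mathrm{Mat}_{2}^{\mathbb{R}}]\rightarrow C^\infty(\mathrm{U}_2)$ sends $\varphi_\sigma$ to a smooth function $\iota_2(\varphi_\sigma)$ living in the minimal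 $K$-type $\tau_\sigma$ of $\sigma$. More precisely, $\iota_2(\varphi_\sigma)\in \tau_{\sigma,-l-L}$.
   Context: For an integer $k$, $\chi_k$ denotes the unitary character $z\mapsto (z/|z|)^k$ of $\mathbb{C}^\times$ (also restricted to $\mathrm{U}_1$), and $|z|_{\mathbb{C}}=z\bar z$. Let $N\geq 0$, $m$, $L$ be integers and let $\sigma = \mathrm{Ind}_{B_{\mathrm{GL}_2}}^{\mathrm{GL}_2(\mathbb{C})} |\cdot|_{\mathbb{C}}^{m/2}\chi_{N+L}\otimes |\cdot|_{\mathbb{C}}^{m/2}\chi_{-N+L}$ (normalized induction from the upper triangular Borel). Let $\chi$ be a character of $\mathbb{C}^\times$ with $\chi(a)=|a|_{\mathbb{C}}^{u_0}\chi_l(a/|a|)$ for some $l\in\mathbb{Z}$, $u_0\in\mathbb{C}$. The minimal $\mathrm{U}_2$-type $\tau_\sigma$ of $\sigma$ has highest weight $(N+L,-N+L)$ and decomposes into one-dimensional weight spaces $\tau_{\sigma,k}=\{v\in\tau_\sigma : \sigma(\mathrm{diag}(e^{i\theta},e^{-i\theta}))v=e^{2ik\theta}v\}$, $-N\le k\le N$. $\mathbb{C}[\mathrm{Mat}_2^{\mathbb{R}}]$ is the space of complex polynomials in the real and imaginary parts of the entries of $Z$ (equivalently in the entries of $Z$ and $\bar Z$), on which $\mathrm{U}_2$ acts by right translation $f(Z,\bar Z)\mapsto f(Zk,\bar Z\bar k)$; $\iota_2$ is restriction of a polynomial to $\mathrm{U}_2$ (so $\iota_2(f)(k)=f(k,\bar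 k)$), which is $\mathrm{U}_2$-equivariant. ''Bi-$(\vec N,\chi_{-l}\otimes\chi_{l+2L})$-equivariant'' means: equivariant under left multiplication by the diagonal torus of $\mathrm{U}_2$ via the character $\chi_{N+L}\otimes\chi_{-N+L}$ (so that the restriction lies in $\mathrm{Ind}_{T\cap\mathrm{U}_2}^{\mathrm{U}_2}\chi_{N+L}\otimes\chi_{-N+L}$), and under right multiplication by $\mathrm{diag}(k_1,k_2)$, $k_1,k_2\in\mathrm{U}_1$, via $\chi_{-l}(k_1)\chi_{l+2L}(k_2)$. *)

(* Defs.v *)
From HB Require Import structures.
From mathcomp Require Import all_boot all_order all_algebra.
From mathcomp Require Import reals.
From mathcomp Require Import complex.
Set Implicit Arguments. Unset Strict Implicit. Unset Printing Implicit Defensive.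
Import Order.TTheory GRing.Theory Num.Theory.
Local Open Scope ring_scope.
Local Open Scope complex_scope.

Section Defs.
Variable R : realType.
Local Notation C := (R[i]).

Definition chi (k : int) (z : C) : C := (z / `|z|) ^ k.

Definition inU1 (z : C) : Prop := z * z^* = 1.

Definition conjT (k : 'M[C]_2) : 'M[C]_2 := (map_mx Num.conj k)^T.
Definition inU2 (k : 'M[C]_2) : Prop := k *m conjT k = 1%:M.

Definition diag2 (a b : C) : 'M[C]_2 :=
  \matrix_(i < 2, j < 2) (if i == j then (if i == 0 :> 'I_2 then a else b) else 0).

(* Polynomial functions in the entries of Z and Zbar, i.e. C[Mat_2^R]:
   the C-algebra of functions generated by the coordinate functions
   Z |-> Z i j and Z |-> conj (Z i j). *)
Inductive is_polyfun : ('M[C]_2 -> C) -> Prop :=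
  | pf_const (c : C) : is_polyfun (fun _ => c)
  | pf_coord (i j : 'I_2) : is_polyfun (fun Z => Z i j)
  | pf_conjcoord (i j : 'I_2) : is_polyfun (fun Z => (Z i j)^*)
  | pf_add f g : is_polyfun f -> is_polyfun g -> is_polyfun (fun Z => f Z + g Z)
  | pf_mul f g : is_polyfun f -> is_polyfun g -> is_polyfun (fun Z => f Z * g Z)
  | pf_ext f g : (forall Z, f Z = g Z) -> is_polyfun f -> is_polyfun g.

(* bi-(vec N, chi_a (x) chi_b)-equivariance on all of Mat_2:
   left torus of U_2 acts through chi_{N+L} (x) chi_{-N+L},
   right torus through chi_a (x) chi_b. *)
Definition bi_equivariant (N : nat) (L a b : int) (f : 'M[C]_2 -> C) : Prop :=
  forall (t1 t2 k1 k2 : C) (Z : 'M[C]_2),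
    inU1 t1 -> inU1 t2 -> inU1 k1 -> inU1 k2 ->
    f (diag2 t1 t2 *m Z *m diag2 k1 k2)
      = chi (N%:Z + L) t1 * chi (- N%:Z + L) t2 * chi a k1 * chi b k2 * f Z.

(* the restriction map iota_2 : C[Mat_2^R] -> C^infty(U_2);
   functions on U_2 are represented by functions on 'M_2, only their
   values at unitary matrices being relevant. *)
Definition iota2 (f : 'M[C]_2 -> C) : 'M[C]_2 -> C := f.

Definition in_Ind (N : nat) (L : int) (f : 'M[C]_2 -> C) : Prop :=
  forall (t1 t2 : C) (k : 'M[C]_2), inU1 t1 -> inU1 t2 -> inU2 k ->
    f (diag2 t1 t2 *m k) = chi (N%:Z + L) t1 * chi (- N%:Z + L) t2 * f k.

(* highest weight vector of weight (N+L, -N+L) in the induced representation: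
   k |-> k_11^(2N) det(k)^(L-N) *)
Definition hw_vec (N : nat) (L : int) (k : 'M[C]_2) : C :=
  (k 0 0) ^+ (2 * N) * (\det k) ^ (L - N%:Z).

(* tau_sigma : the U_2-subrepresentation of the induced representation
   (right translation) generated by the highest weight vector, i.e.
   the span of the right U_2-translates of hw_vec. *)
Definition in_tau (N : nat) (L : int) (f : 'M[C]_2 -> C) : Prop :=
  exists (n : nat) (c : 'I_n -> C) (g : 'I_n -> 'M[C]_2),
    (forall i, inU2 (g i)) /\
    forall k, inU2 k -> f k = \sum_(i < n) c i * hw_vec N L (k *m g i).

(* weight space tau_{sigma,w} condition:
   sigma(diag(s, s^-1)) f = s^(2w) f for all s in U_1
   (sigma acts by right translation). *)
Definition weight_vec (w : int) (f : 'M[C]_2 -> C) : Prop :=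
  forall (s : C) (k : 'M[C]_2), inU1 s -> inU2 k ->
    f (k *m diag2 s s^-1) = s ^ (2 * w) * f k.

Definition in_tau_weight (N : nat) (L w : int) (f : 'M[C]_2 -> C) : Prop :=
  in_tau N L f /\ weight_vec w f.

Definition phi_sigma (N : nat) (L l : int) (Z : 'M[C]_2) : C :=
  let x1 := Z 0 0 in let y1 := Z 0 1 in
  let x2 := Z 1 0 in let y2 := Z 1 1 in
  let dZ := x1 * y2 - x2 * y1 in
  let dZb := x1^* * y2^* - x2^* * y1^* in
  (if 0 <= l + L then (x1 * x2^*) ^ (N%:Z - l - L) * (x2^*) ^ (2 * (l + L))
   else (x1 * x2^*) ^ (N%:Z + l + L) * x1 ^ (- (2 * (l + L))))
  * (if 0 <= l + 2 * L then dZ ^ (l + 2 * L) else dZb ^ (- (l + 2 * L))).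

End Defs.

(* Main.v *)
Require Import Defs.
From HB Require Import structures.
From mathcomp Require Import all_boot all_order all_algebra.
From mathcomp Require Import reals.
From mathcomp Require Import complex.
From mathcomp Require Import ring lra zify.
Import Order.TTheory GRing.Theory Num.Theory.
Local Open Scope ring_scope.
Set Implicit Arguments. Unset Strict Implicit. Unset Printing Implicit Defensive.

Section S.
Variable R : realType.
Local Notation C := (R[i]).

Lemma det2 (A : 'M[C]_2) : \det A = A 0 0 * A 1 1 - A 1 0 * A 0 1.
Proof.
rewrite (expand_det_row _ 0) !big_ord_recl big_ord0 /cofactor.
rewrite !det_mx11 /= !mxE /=.
rewrite /bump /= expr0 expr1 !mul1r mulN1r addr0 mulrN.
have -> : lift (0:'I_2) 0 = 1 by apply: val_inj.
have -> : lift (1:'I_2) 0 = 0 by apply: val_inj.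
have -> : @ord0 1 = 0 by apply: val_inj.
by rewrite [A 0 1 * _]mulrC.
Qed.

Lemma conjE (x : C) : Num.conj x = conjc x.
Proof. reflexivity. Qed.

Lemma U1_norm (z : C) : inU1 z -> `|z| = 1.
Proof.
rewrite /inU1 => h; apply/eqP; rewrite -sqrp_eq1 //.
by rewrite sqr_normc h.
Qed.

Lemma chiU (k : int) (z : C) : inU1 z -> chi k z = z ^ k.
Proof. by move=> h; rewrite /chi U1_norm // divr1. Qed.

Lemma U1_neq0 (z : C) : inU1 z -> z != 0.
Proof. rewrite /inU1 => h; apply/eqP => z0; move: h; rewrite z0 mul0r => /eqP; by rewrite eq_sym oner_eq0. Qed.

Lemma U1_conj (z : C) : inU1 z -> conjc z = z^-1.
Proof.
move=> h; have z0 := U1_neq0 h; move: h; rewrite /inU1 => h.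
by rewrite -[conjc z]mul1r -(mulVf z0) -mulrA h mulr1.
Qed.

Definition Dq (q : int) (Z : 'M[C]_2) : C :=
  if 0 <= q then (Z 0 0 * Z 1 1 - Z 1 0 * Z 0 1) ^ q
  else (conjc (Z 0 0) * conjc (Z 1 1) - conjc (Z 1 0) * conjc (Z 0 1)) ^ (- q).

Lemma phi_gen (N j : nat) (L l : int) (hj : j%:Z = N%:Z + (l + L)) (hj2 : (j <= 2 * N)%N)
  (hj1 : `|l + L| <= N%:Z) (Z : 'M[C]_2) :
  phi_sigma N L l Z = Z 0 0 ^+ (2 * N - j) * conjc (Z 1 0) ^+ j * Dq (l + 2 * L) Z.
Proof.
rewrite /phi_sigma /Dq /=; congr (_ * _).
case: ifP => hp.
- have e1 : N%:Z - l - L = (2 * N - j)%N :> int by lia.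
  have e2 : 2 * (l + L) = (2 * j - 2 * N)%N :> int by lia.
  rewrite e1 e2 -!exprnP exprMn -mulrA -exprD; congr (_ * _ ^+ _); lia.
- have e1 : N%:Z + l + L = j :> int by lia.
  have e2 : - (2 * (l + L)) = (2 * N - 2 * j)%N :> int by lia.
  rewrite e1 e2 -!exprnP exprMn mulrAC -exprD; congr (_ ^+ _ * _); lia.
Qed.


Lemma pf_pow (f : 'M[C]_2 -> C) (n : nat) : is_polyfun f -> is_polyfun (fun Z => f Z ^+ n).
Proof.
move=> hf; elim: n => [|n IH].
  apply: (pf_ext (f := fun _ => 1)); last exact: pf_const.
  by move=> Z; rewrite expr0.
apply: (pf_ext (f := fun Z => f Z * f Z ^+ n)); first by move=> Z; rewrite exprS.
exact: pf_mul.
Qed.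

Lemma pf_gen (N j : nat) (q : int) :
  is_polyfun (fun Z : 'M[C]_2 => Z 0 0 ^+ (2 * N - j) * conjc (Z 1 0) ^+ j * Dq q Z).
Proof.
apply: pf_mul.
  by apply: pf_mul; apply: pf_pow; [apply: pf_coord | apply: pf_conjcoord].
rewrite /Dq; case hq: (0 <= q).
- apply: (pf_ext (f := fun Z : 'M[C]_2 => (Z 0 0 * Z 1 1 + (-1) * (Z 1 0 * Z 0 1)) ^+ `|q|%N)).
    move=> Z.
 by rewrite exprnP gez0_abs // mulN1r.
  apply: pf_pow; apply: pf_add; first by apply: pf_mul; apply: pf_coord.
  by apply: pf_mul; [apply: pf_const | apply: pf_mul; apply: pf_coord].
- apply: (pf_ext (f := fun Z : 'M[C]_2 => (conjc (Z 0 0) * conjc (Z 1 1) + (-1) * (conjc (Z 1 0) * conjc (Z 0 1))) ^+ `|q|%N)).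
    move=> Z.
 by rewrite exprnP ltz0_abs ?mulN1r // ltNge hq.
  apply: pf_pow; apply: pf_add; first by apply: pf_mul; apply: pf_conjcoord.
  by apply: pf_mul; [apply: pf_const | apply: pf_mul; apply: pf_conjcoord].
Qed.

Lemma diag_entry (t1 t2 k1 k2 : C) (Z : 'M[C]_2) (i j : 'I_2) :
  (diag2 t1 t2 *m Z *m diag2 k1 k2) i j =
  (if i == 0 then t1 else t2) * Z i j * (if j == 0 then k1 else k2).
Proof.
have E : forall x : 'I_2, x = 0 \/ x = 1.
  by case=> [[|[|//]]] ?; [left|right]; apply: val_inj.
have l00 : lift (@ord0 1) ord0 = 1 by apply: val_inj.
have o0 : @ord0 1 = 0 by apply: val_inj.
case: (E i) => ->; case: (E j) => ->;
rewrite !mxE !big_ord_recl !big_ord0 !mxE !l00 !o0 /=;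
rewrite ?mulr0 ?mul0r ?addr0 ?add0r ?mulr1 ?mul1r;
rewrite !big_ord_recl !big_ord0 !mxE !l00 !o0 /=;
by rewrite ?mulr0 ?mul0r ?addr0 ?add0r ?mulr1 ?mul1r.
Qed.


Lemma Dq_equiv (q : int) (t1 t2 k1 k2 : C) (Z : 'M[C]_2) :
  inU1 t1 -> inU1 t2 -> inU1 k1 -> inU1 k2 ->
  Dq q (diag2 t1 t2 *m Z *m diag2 k1 k2) = (t1 * t2 * k1 * k2) ^ q * Dq q Z.
Proof.
move=> h1 h2 h3 h4; rewrite /Dq !diag_entry /=.
case: ifP => hq.
- rewrite -expfzMl; congr (_ ^ _); ring.
- rewrite !rmorphM /= (U1_conj h1) (U1_conj h2) (U1_conj h3) (U1_conj h4).
  have -> : t1^-1 * conjc (Z 0 0) * k1^-1 * (t2^-1 * conjc (Z 1 1) * k2^-1) -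
    t2^-1 * conjc (Z 1 0) * k1^-1 * (t1^-1 * conjc (Z 0 1) * k2^-1) =
    (t1 * t2 * k1 * k2)^-1 * (conjc (Z 0 0) * conjc (Z 1 1) - conjc (Z 1 0) * conjc (Z 0 1)).
    rewrite !invfM; ring.
  by rewrite expfzMl exprz_inv opprK.
Qed.

Lemma gen_equiv (N j : nat) (L l : int) (hj : j%:Z = N%:Z + (l + L)) (hj2 : (j <= 2 * N)%N)
  (t1 t2 k1 k2 : C) (Z : 'M[C]_2) :
  inU1 t1 -> inU1 t2 -> inU1 k1 -> inU1 k2 ->
  let G := fun Z : 'M[C]_2 => Z 0 0 ^+ (2 * N - j) * conjc (Z 1 0) ^+ j * Dq (l + 2 * L) Z in
  G (diag2 t1 t2 *m Z *m diag2 k1 k2)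
  = chi (N%:Z + L) t1 * chi (- N%:Z + L) t2 * chi (- l) k1 * chi (l + 2 * L) k2 * G Z.
Proof.
move=> h1 h2 h3 h4 G; rewrite /G Dq_equiv // !diag_entry /= !rmorphM /= (U1_conj h2) (U1_conj h3).
rewrite !chiU //.
set A := (2 * N - j)%N; set D := Dq _ Z.
rewrite !exprMn.
transitivity ((t1 ^+ A * k1 ^+ A * t2^-1 ^+ j * k1^-1 ^+ j * (t1 * t2 * k1 * k2) ^ (l + 2 * L))
   * (Z 0 0 ^+ A * conjc (Z 1 0) ^+ j * D)); first ring.
congr (_ * _).
rewrite !exprnP !exprz_inv !expfzMl.
have n1 := U1_neq0 h1; have n2 := U1_neq0 h2; have n3 := U1_neq0 h3.
transitivity ((t1 ^ A * t1 ^ (l + 2 * L)) * (t2 ^ (- j%:Z) * t2 ^ (l + 2 * L))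
   * (k1 ^ A * k1 ^ (- j%:Z) * k1 ^ (l + 2 * L)) * k2 ^ (l + 2 * L)); first ring.
rewrite -!expfzDr //.
congr (_ ^ _ * _ ^ _ * _ ^ _ * _); rewrite /A; lia.
Qed.


Lemma U2_entries (k : 'M[C]_2) : inU2 k ->
  k 0 0 * conjc (k 1 0) + k 0 1 * conjc (k 1 1) = 0 /\
  k 1 0 * conjc (k 1 0) + k 1 1 * conjc (k 1 1) = 1.
Proof.
rewrite /inU2 => h.
have l00 : lift (@ord0 1) ord0 = 1 by apply: val_inj.
have o0 : @ord0 1 = 0 by apply: val_inj.
have e1 := congr1 (fun M : 'M[C]_2 => M 0 1) h; have e2 := congr1 (fun M : 'M[C]_2 => M 1 1) h.
move: e1 e2 => /=; rewrite !mxE !big_ord_recl !big_ord0 !mxE !l00 !o0 /= !addr0.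
by move=> -> ->.
Qed.

Lemma U2_det (k : 'M[C]_2) : inU2 k -> \det k * conjc (\det k) = 1.
Proof.
rewrite /inU2 => h.
have := congr1 determinant h; rewrite det_mulmx det1 /conjT det_tr.
by rewrite (det_map_mx Num.conj).
Qed.

Lemma U2_c10 (k : 'M[C]_2) : inU2 k -> conjc (k 1 0) = - k 0 1 / \det k.
Proof.
move=> h; have [e1 e2] := U2_entries h.
have hd := U2_det h.
have d0 : \det k != 0.
  by apply/eqP => d0; move: hd; rewrite d0 mul0r => /eqP; rewrite eq_sym oner_eq0.
apply: (mulIf d0); rewrite divfK // det2.
have e1' : k 0 0 * conjc (k 1 0) = - (k 0 1 * conjc (k 1 1)).
  by apply/eqP; rewrite -addr_eq0 e1.
have e2' : k 1 0 * conjc (k 1 0) = 1 - k 1 1 * conjc (k 1 1) by rewrite -e2 addrK.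
transitivity (k 1 1 * (k 0 0 * conjc (k 1 0)) - k 0 1 * (k 1 0 * conjc (k 1 0))); first ring.
rewrite e1' e2'; ring.
Qed.

Lemma gen_U2 (N j : nat) (L l : int) (hj : j%:Z = N%:Z + (l + L)) (k : 'M[C]_2) :
  inU2 k ->
  k 0 0 ^+ (2 * N - j) * conjc (k 1 0) ^+ j * Dq (l + 2 * L) k
  = (-1) ^+ j * (k 0 0 ^+ (2 * N - j) * k 0 1 ^+ j) * (\det k) ^ (L - N%:Z).
Proof.
move=> h; have hd := U2_det h.
have d0 : \det k != 0.
  by apply/eqP => d0; move: hd; rewrite d0 mul0r => /eqP; rewrite eq_sym oner_eq0.
have hD : Dq (l + 2 * L) k = (\det k) ^ (l + 2 * L).
  rewrite /Dq; case: ifP => hq; first by rewrite det2.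
  have -> : conjc (k 0 0) * conjc (k 1 1) - conjc (k 1 0) * conjc (k 0 1) = (\det k)^-1.
    rewrite det2 -!rmorphM -rmorphB -det2.
    by apply: (mulfI d0); rewrite hd divff.
  by rewrite exprz_inv opprK.
rewrite hD U2_c10 // mulNr -mulrN1 !exprMn.
have E : (\det k)^-1 ^+ j * (\det k) ^ (l + 2 * L) = (\det k) ^ (L - N%:Z).
  rewrite exprnP exprz_inv -expfzDr //; congr (_ ^ _); lia.
rewrite -E; ring.
Qed.

Lemma mono_comb (M j : nat) : (j <= M)%N ->
  exists w : 'I_M.+1 -> C, forall x y : C,
    x ^+ (M - j) * y ^+ j = \sum_(m < M.+1) w m * (x + m%:R * y) ^+ M.
Proof.
move=> hjM.
pose a : 'rV[C]_M.+1 := \row_(m < M.+1) (m : nat)%:R.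
pose V := Vandermonde M.+1 a.
have uV : V \in unitmx.
  rewrite unitmxE unitfE det_Vandermonde; apply/prodf_neq0 => i _.
  apply/prodf_neq0 => m him; rewrite !mxE subr_eq0 eqr_nat.
  by rewrite neq_ltn him orbT.
have Cn0 : ('C(M, j)%:R : C) != 0 by rewrite pnatr_eq0 -lt0n bin_gt0.
pose jj : 'I_M.+1 := Ordinal (hjM : (j < M.+1)%N).
exists (fun m => invmx V m jj / 'C(M, j)%:R) => x y.
pose c : 'rV[C]_M.+1 := \row_(i < M.+1) (x ^+ (M - i) * y ^+ i * 'C(M, i)%:R).
have cV : c *m V = \row_(m < M.+1) (x + m%:R * y) ^+ M.
  apply/rowP => m; rewrite !mxE exprDn; apply: eq_bigr => i _.
  rewrite !mxE mulr_natr; rewrite exprMn; ring.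
have := congr1 (fun r : 'rV[C]_M.+1 => (r *m invmx V) 0 jj) cV.
rewrite /= mulmxK // !mxE => ec.
apply: (mulIf Cn0); rewrite mulr_suml.
transitivity (c 0 jj); first by rewrite mxE.
rewrite mxE ec; apply: eq_bigr => m _; by rewrite mxE mulrAC divfK // mulrC.
Qed.

Definition alp (m : nat) : C := (sqrtC (1 + m%:R ^+ 2))^-1.
Definition rot (m : nat) : 'M[C]_2 :=
  \matrix_(i < 2, j < 2) (if i == j then alp m
                          else if i == 0 then - (m%:R * alp m) else m%:R * alp m).

Lemma onem_ge0 (m : nat) : 0 <= 1 + m%:R ^+ 2 :> C.
Proof. by rewrite addr_ge0 // exprn_ge0 // ler0n. Qed.

Lemma onem_neq0 (m : nat) : 1 + m%:R ^+ 2 != 0 :> C.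
Proof.
rewrite paddr_eq0 //; last by rewrite exprn_ge0 // ler0n.
by rewrite oner_eq0.
Qed.

Lemma alp_neq0 m : alp m != 0.
Proof. by rewrite /alp invr_eq0 sqrtC_eq0 onem_neq0. Qed.

Lemma alp_sq m : alp m ^+ 2 * (1 + m%:R ^+ 2) = 1.
Proof. by rewrite /alp exprVn sqrtCK mulVf // onem_neq0. Qed.

Lemma alp_conj m : conjc (alp m) = alp m.
Proof. apply: geC0_conj; by rewrite /alp invr_ge0 sqrtC_ge0 onem_ge0. Qed.

Lemma rot_det m : \det (rot m) = 1.
Proof. rewrite det2 !mxE /= -[RHS](alp_sq m); ring. Qed.

Lemma rot_U2 m : inU2 (rot m).
Proof.
rewrite /inU2 /conjT.
have E : forall x : 'I_2, x = 0 \/ x = 1.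
  by case=> [[|[|//]]] ?; [left|right]; apply: val_inj.
have l00 : lift (@ord0 1) ord0 = 1 by apply: val_inj.
have o0 : @ord0 1 = 0 by apply: val_inj.
apply/matrixP => i j.
case: (E i) => ->; case: (E j) => ->;
rewrite !mxE !big_ord_recl !big_ord0 !mxE !l00 !o0 /= !conjE ?rmorphN ?rmorphM /= ?rmorph_nat ?alp_conj;
first [ring | (rewrite -[RHS](alp_sq m); ring)].
Qed.

Lemma rot_00 (k : 'M[C]_2) m : (k *m rot m) 0 0 = k 0 0 * alp m + k 0 1 * (m%:R * alp m).
Proof.
have l00 : lift (@ord0 1) ord0 = 1 by apply: val_inj.
have o0 : @ord0 1 = 0 by apply: val_inj.
by rewrite !mxE !big_ord_recl !big_ord0 !mxE !l00 !o0 /= addr0.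
Qed.

Lemma in_tau_gen (N j : nat) (L : int) : (j <= 2 * N)%N ->
  exists (n : nat) (c : 'I_n -> C) (g : 'I_n -> 'M[C]_2),
    (forall i, inU2 (g i)) /\
    forall k, inU2 k -> (-1) ^+ j * (k 0 0 ^+ (2 * N - j) * k 0 1 ^+ j) * (\det k) ^ (L - N%:Z)
      = \sum_(i < n) c i * hw_vec N L (k *m g i).
Proof.
move=> hj; have [w hw] := mono_comb hj.
exists (2 * N).+1, (fun m => (-1) ^+ j * w m * (alp m)^-1 ^+ (2 * N)), (fun m => rot m).
split; first by move=> i; apply: rot_U2.
move=> k hk; rewrite hw mulr_sumr mulr_suml; apply: eq_bigr => m _.
rewrite /hw_vec rot_00 det_mulmx rot_det mulr1.
have -> : k 0 0 + m%:R * k 0 1 = (alp m)^-1 * (k 0 0 * alp m + k 0 1 * (m%:R * alp m)).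
  have a0 := alp_neq0 m; field; exact: a0.
rewrite exprMn; ring.
Qed.

Lemma diag11 : diag2 (1 : C) 1 = 1%:M.
Proof. apply/matrixP => i j; rewrite !mxE; case: (i == j) => //; by case: ifP. Qed.

Lemma chi1 (k : int) : chi k (1 : C) = 1.
Proof. by rewrite /chi normr1 divr1 exp1rz. Qed.

Lemma inU1_1 : inU1 (1 : C).
Proof. by change (1 * conjc 1 = 1 :> C); rewrite conjc1 mulr1. Qed.

Lemma inU1_V (s : C) : inU1 s -> inU1 s^-1.
Proof.
move=> h; have s0 := U1_neq0 h; change (s^-1 * conjc s^-1 = 1); rewrite conjc_inv (U1_conj h) invrK mulVf //.
Qed.

End S.

Theorem corollary4p2 (R : realType) (N : nat) (L l : int)
  (hlL : `|l + L| <= N%:Z) :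
  is_polyfun (@phi_sigma R N L l)
  /\ bi_equivariant N L (- l) (l + 2 * L) (@phi_sigma R N L l)
  /\ in_Ind N L (iota2 (@phi_sigma R N L l))
  /\ in_tau N L (iota2 (@phi_sigma R N L l))
  /\ in_tau_weight N L (- (l + L)) (iota2 (@phi_sigma R N L l)).
Proof.
have [hlo hhi] : - N%:Z <= l + L /\ l + L <= N%:Z by move: hlL; rewrite ler_norml => /andP.
have [j hj] : exists j : nat, j%:Z = N%:Z + (l + L).
  exists (absz (N%:Z + (l + L))); rewrite gez0_abs //; lia.
have hj2 : (j <= 2 * N)%N by lia.
have hgen := phi_gen (R := R) hj hj2 hlL.
have beq : bi_equivariant N L (- l) (l + 2 * L) (@phi_sigma R N L l).
  move=> t1 t2 k1 k2 Z h1 h2 h3 h4; rewrite !hgen.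
  exact: (gen_equiv hj hj2 Z h1 h2 h3 h4).
have htau : in_tau N L (iota2 (@phi_sigma R N L l)).
  have [n [c [g [hg hk]]]] := in_tau_gen R L hj2.
  exists n, c, g; split => // k hk2.
  by rewrite /iota2 hgen gen_U2 // hk.
split.
  apply: (pf_ext _ (pf_gen R N j (l + 2 * L))) => Z; by rewrite hgen.
split => //.
split.
  move=> t1 t2 k h1 h2 _; rewrite /iota2.
  have := beq t1 t2 1 1 k h1 h2 (inU1_1 R) (inU1_1 R).
  rewrite diag11 mulmx1 => ->.
  by rewrite !chi1 !mulr1.
split => //; split => //.
move=> s k hs hk; rewrite /iota2.
have := beq 1 1 s s^-1 k (inU1_1 R) (inU1_1 R) hs (inU1_V hs).
rewrite diag11 mul1mx => ->.
rewrite !chi1 !chiU ?inU1_V //; last exact: inU1_V.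
transitivity (s ^ (- l) * s ^ (- (l + 2 * L)) * phi_sigma N L l k).
  by rewrite exprz_inv; ring.
rewrite -expfzDr ?(U1_neq0 hs) //.
congr (_ ^ _ * _); lia.
Qed.
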